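(* Every forward complete control system $\Sigma=(X,\mathcal U,\phi)$ that is input-to-state stable (ISS) is norm-to-integral ISS.
   Context: Let $X$, $U$ be Banach spaces and let $\mathcal U$ be a normed vector space of functions $\mathbb R_+\to U$ satisfying: (shift invariance) for all $u\in\mathcal U$ and $\tau\ge0$, $u(\cdot+\tau)\in\mathcal U$ and $\|u(\cdot+\tau)\|_{\mathcal U}\le\|u\|_{\mathcal U}$; (concatenation) for all $u_1,u_2\in\mathcal U$ and $t>0$ the function equal to $u_1(\tau)$ for $\tau\in[0,t]$ and to $u_2(\tau-t)$ for $\tau>t$ belongs to $\mathcal U$. A forward complete control system is a triple $\Sigma=(X,\mathcal U,\phi)$ with $\phi:\mathbb R_+\times X\times\mathcal U\to X$ such that: $\phi(0,x,u)=x$; (causality) $\phi(t,x,u)=\phi(t,x,\tilde u)$ whenever $u|_{[0,t]}=\tilde u|_{[0,t]}$; for each $(x,u)$ the map $t\mapsto\phi(t,x,u)$ is continuous; (cocycle) $\phi(h,\phi(t,x,u),u(t+\cdot))=\phi(t+h,x,u)$ for all $t,h\ge0$, $x\in X$, $u\in\mathcal U$. Comparison functions: $\mathcal K$ = continuous strictly increasing $\gamma:\mathbb R_+\to\mathbb R_+$ with $\gamma(0)=0$; $\mathcal K_\infty$ = unbounded functions in $\mathcal K$; $\mathcal L$ = continuous strictly decreasing $\gamma:\mathbb R_+\to\mathbb R_+$ with $\gamma(t)\to0$; $\mathcal{KL}$ = $\beta:\mathbb R_+^2\to\mathbb R_+$ with $\beta(\cdot,t)\in\mathcal K$ for all $t\ge0$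 and $\beta(r,\cdot)\in\mathcal L$ for all $r>0$. $\Sigma$ is ISS if there are $\beta\in\mathcal{KL}$, $\gamma\in\mathcal K$ with $\|\phi(t,x,u)\|_X\le\beta(\|x\|_X,t)+\gamma(\|u\|_{\mathcal U})$ for all $x\in X$, $u\in\mathcal U$, $t\ge0$. $\Sigma$ is norm-to-integral ISS if there are $\alpha\in\mathcal K$, $\psi,\sigma\in\mathcal K_\infty$ with $\int_0^t\alpha(\|\phi(s,x,u)\|_X)\,ds\le\psi(\|x\|_X)+t\,\sigma(\|u\|_{\mathcal U})$ for all $x\in X$, $u\in\mathcal U$, $t\ge0$. *)

(* Defs.v *)
From Stdlib Require Export Reals.
Open Scope R_scope.

Record NormedSpace := {
  ns_car :> Type;
  ns_zero : ns_car;
  ns_add : ns_car -> ns_car -> ns_car;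
  ns_opp : ns_car -> ns_car;
  ns_scal : R -> ns_car -> ns_car;
  ns_norm : ns_car -> R;
  ns_add_assoc : forall a b c, ns_add a (ns_add b c) = ns_add (ns_add a b) c;
  ns_add_comm : forall a b, ns_add a b = ns_add b a;
  ns_add_zero : forall a, ns_add a ns_zero = a;
  ns_add_opp : forall a, ns_add a (ns_opp a) = ns_zero;
  ns_scal_one : forall a, ns_scal 1 a = a;
  ns_scal_assoc : forall k l a, ns_scal k (ns_scal l a) = ns_scal (k * l) a;
  ns_scal_distr_l : forall k a b, ns_scal k (ns_add a b) = ns_add (ns_scal k a) (ns_scal k b);
  ns_scal_distr_r : forall k l a, ns_scal (k + l) a = ns_add (ns_scal k a) (ns_scal l a);
  ns_norm_eq0 : forall a, ns_norm a = 0 -> a = ns_zero;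
  ns_norm_triangle : forall a b, ns_norm (ns_add a b) <= ns_norm a + ns_norm b;
  ns_norm_scal : forall k a, ns_norm (ns_scal k a) = Rabs k * ns_norm a
}.

Arguments ns_zero {_}.
Arguments ns_add {_} _ _.
Arguments ns_opp {_} _.
Arguments ns_scal {_} _ _.
Arguments ns_norm {_} _.

Definition ns_sub {X : NormedSpace} (a b : X) : X := ns_add a (ns_opp b).

Definition Banach (X : NormedSpace) : Prop :=
  forall s : nat -> X,
    (forall eps, eps > 0 -> exists N, forall m n, (m >= N)%nat -> (n >= N)%nat ->
        ns_norm (ns_sub (s m) (s n)) < eps) ->
    exists l : X, forall eps, eps > 0 -> exists N, forall n, (n >= N)%nat ->
        ns_norm (ns_sub (s n) l) < eps.

(** An element [u : UU] is the function [fun s => ev u s] restricted to [s >= 0];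
    [ev] is injective (as functions on R_+) and the vector operations of [UU]
    are the pointwise ones. *)
Definition input_function_space (U UU : NormedSpace) (ev : UU -> R -> U) : Prop :=
  (forall u v : UU, (forall s, 0 <= s -> ev u s = ev v s) -> u = v) /\
  (forall s, 0 <= s -> ev ns_zero s = ns_zero) /\
  (forall (u v : UU) s, 0 <= s -> ev (ns_add u v) s = ns_add (ev u s) (ev v s)) /\
  (forall (k : R) (u : UU) s, 0 <= s -> ev (ns_scal k u) s = ns_scal k (ev u s)) /\
  (forall (u : UU) tau, 0 <= tau ->
     exists v : UU, (forall s, 0 <= s -> ev v s = ev u (s + tau)) /\
                    ns_norm v <= ns_norm u) /\
  (forall (u1 u2 : UU) t, 0 < t ->
     exists w : UU, forall s, 0 <= s ->
        ev w s = if Rle_dec s t then ev u1 s else ev u2 (s - t)).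

(** * Forward complete control systems  Sigma = (X, UU, phi),
    with phi : R_+ x X x UU -> X (only times t >= 0 are meaningful). *)
Definition forward_complete_control_system (X U UU : NormedSpace)
    (ev : UU -> R -> U) (phi : R -> X -> UU -> X) : Prop :=
  (forall x u, phi 0 x u = x) /\
  (forall t x (u u' : UU), 0 <= t ->
     (forall s, 0 <= s <= t -> ev u s = ev u' s) -> phi t x u = phi t x u') /\
  (forall x u t eps, 0 <= t -> eps > 0 ->
     exists delta, delta > 0 /\ forall t', 0 <= t' -> Rabs (t' - t) < delta ->
        ns_norm (ns_sub (phi t' x u) (phi t x u)) < eps) /\
  (forall t h x (u v : UU), 0 <= t -> 0 <= h ->
     (forall s, 0 <= s -> ev v s = ev u (t + s)) ->
     phi h (phi t x u) v = phi (t + h) x u).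

(** * Comparison functions (functions R_+ -> R_+, modelled as R -> R,
    all properties being required on R_+ only). *)
Definition cont_on_nonneg (g : R -> R) : Prop :=
  forall x eps, 0 <= x -> eps > 0 ->
    exists delta, delta > 0 /\
      forall y, 0 <= y -> Rabs (y - x) < delta -> Rabs (g y - g x) < eps.

Definition class_K (g : R -> R) : Prop :=
  cont_on_nonneg g /\
  (forall x y, 0 <= x -> x < y -> g x < g y) /\
  g 0 = 0.

Definition class_Kinf (g : R -> R) : Prop :=
  class_K g /\ (forall M, exists x, 0 <= x /\ g x > M).

Definition class_L (g : R -> R) : Prop :=
  cont_on_nonneg g /\
  (forall x, 0 <= x -> 0 <= g x) /\
  (forall x y, 0 <= x -> x < y -> g y < g x) /\
  (forall eps, eps > 0 -> exists T, forall t, t >= T -> Rabs (g t) < eps).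

Definition class_KL (b : R -> R -> R) : Prop :=
  (forall t, 0 <= t -> class_K (fun r => b r t)) /\
  (forall r, 0 < r -> class_L (fun t => b r t)).

Definition ISS (X U UU : NormedSpace) (ev : UU -> R -> U)
    (phi : R -> X -> UU -> X) : Prop :=
  exists (beta : R -> R -> R) (gamma : R -> R),
    class_KL beta /\ class_K gamma /\
    forall (x : X) (u : UU) t, 0 <= t ->
      ns_norm (phi t x u) <= beta (ns_norm x) t + gamma (ns_norm u).

(** The integral is the Riemann integral over [0, t]; the statement asserts
    that the integrand is Riemann integrable and bounds the integral. *)
Definition norm_to_integral_ISS (X U UU : NormedSpace) (ev : UU -> R -> U)
    (phi : R -> X -> UU -> X) : Prop :=
  exists (alpha psi sigma : R -> R),
    class_K alpha /\ class_Kinf psi /\ class_Kinf sigma /\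
    forall (x : X) (u : UU) t, 0 <= t ->
      exists pr : Riemann_integrable (fun s => alpha (ns_norm (phi s x u))) 0 t,
        RiemannInt pr <= psi (ns_norm x) + t * sigma (ns_norm u).

(* Main.v *)
Require Import Defs.
From Stdlib Require Import Reals Lra Lia ZArith ClassicalEpsilon.
From Coquelicot Require Import Coquelicot.
Open Scope R_scope.

Definition fl (r:R) : nat := Z.to_nat (Int_part r).

Lemma fl_spec r : 0 <= r -> INR (fl r) <= r < INR (fl r) + 1.
Proof.
  intro Hr. destruct (base_Int_part r) as [H1 H2].
  assert (Hz : (0 <= Int_part r)%Z).
  { assert (-1 < Int_part r)%Z; [|lia]. apply lt_IZR. simpl. lra. }
  unfold fl. rewrite INR_IZR_INZ, Z2Nat.id by exact Hz. lra.
Qed.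

Lemma nat_unit_unique k k' r : INR k <= r < INR k + 1 -> INR k' <= r < INR k' + 1 -> k = k'.
Proof.
  intros [A B] [C D]. destruct (Nat.lt_total k k') as [h|[h|h]]; auto; exfalso.
  - assert (INR (S k) <= INR k') by (apply le_INR; lia). rewrite S_INR in H. lra.
  - assert (INR (S k') <= INR k) by (apply le_INR; lia). rewrite S_INR in H. lra.
Qed.

Lemma fl_eq k r : INR k <= r < INR k + 1 -> fl r = k.
Proof.
  intro H. apply (nat_unit_unique _ _ r); auto. apply fl_spec.
  pose proof (pos_INR k). lra.
Qed.

Lemma fl_mono x y : 0 <= x -> x <= y -> (fl x <= fl y)%nat.
Proof.
  intros Hx Hxy. destruct (le_lt_dec (fl x) (fl y)); auto. exfalso.
  assert (INR (S (fl y)) <= INR (fl x)) by (apply le_INR; lia). rewrite S_INR in H.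
  pose proof (fl_spec x Hx). pose proof (fl_spec y ltac:(lra)). lra.
Qed.

Section Dom.
Variable D : nat -> R.
Fixpoint E (n:nat) : R := match n with 0 => 0 | S i => E i + 1 + Rmax 0 (D (S i) - E i) end.
Definition Hf r := E (fl r) + (r - INR (fl r)) * (E (S (fl r)) - E (fl r)).

Lemma E_step i : 1 <= E (S i) - E i.
Proof. simpl. pose proof (Rmax_l 0 (D (S i) - E i)). lra. Qed.

Lemma E_mono i j : (i <= j)%nat -> E i <= E j.
Proof. induction 1. lra. pose proof (E_step m). lra. Qed.

Lemma E_nonneg i : 0 <= E i.
Proof. apply (E_mono 0 i). lia. Qed.

Lemma E_dom i : D (S i) <= E (S i).
Proof. simpl. pose proof (Rmax_r 0 (D (S i) - E i)). pose proof (Rmax_l 0 (D (S i) - E i)). lra. Qed.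

Lemma Hk k r : INR k <= r <= INR k + 1 -> Hf r = E k + (r - INR k) * (E (S k) - E k).
Proof.
  intros [A B]. destruct (Rlt_or_le r (INR k + 1)).
  - unfold Hf. rewrite (fl_eq k r) by lra. reflexivity.
  - assert (r = INR (S k)) by (rewrite S_INR; lra). subst r.
    unfold Hf. rewrite (fl_eq (S k) (INR (S k))) by lra. rewrite S_INR. ring.
Qed.

Lemma Hseg k x y : INR k <= x -> x <= y -> y <= INR k + 1 -> Hf y - Hf x = (y - x) * (E (S k) - E k).
Proof. intros. rewrite (Hk k x), (Hk k y) by lra. ring. Qed.

Lemma Hbounds n : forall x y, 0 <= x -> x <= y -> (fl y <= fl x + n)%nat ->
  y - x <= Hf y - Hf x <= (y - x) * E (S (fl y)).
Proof.
  induction n; intros x y Hx Hxy Hn.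
  - assert (fl y = fl x) by (pose proof (fl_mono x y Hx Hxy); lia).
    pose proof (fl_spec x Hx). pose proof (fl_spec y ltac:(lra)).
    rewrite H in *. rewrite (Hseg (fl x) x y) by lra.
    pose proof (E_step (fl x)). pose proof (E_nonneg (fl x)).
    split; [|apply Rmult_le_compat_l]; try lra.
    rewrite <- (Rmult_1_r (y - x)) at 1. apply Rmult_le_compat_l; lra.
  - destruct (le_lt_dec (fl y) (fl x + n)) as [h|h]. { apply IHn; auto. }
    set (k := fl x) in *. pose proof (fl_spec x Hx) as Fx. fold k in Fx.
    set (z := INR k + 1).
    assert (Hz : INR (S k) <= INR (fl y)) by (apply le_INR; lia).
    rewrite S_INR in Hz. pose proof (fl_spec y ltac:(lra)) as Fy.
    assert (flz : fl z = S k) by (apply fl_eq; rewrite S_INR; unfold z; lra).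
    assert (Hxz : Hf z - Hf x = (z - x) * (E (S k) - E k)) by (apply Hseg; unfold z; lra).
    assert (IH : y - z <= Hf y - Hf z <= (y - z) * E (S (fl y))).
    { apply IHn. unfold z; pose proof (pos_INR k); lra. unfold z; lra. rewrite flz. lia. }
    pose proof (E_step k). pose proof (E_nonneg k).
    assert (E (S k) <= E (S (fl y))) by (apply E_mono; lia).
    unfold z in *. nra.
Qed.

Lemma H_incr x y : 0 <= x -> x <= y -> y - x <= Hf y - Hf x <= (y - x) * E (S (fl y)).
Proof. intros. apply (Hbounds (fl y)); auto. lia. Qed.

Lemma H_0 : Hf 0 = 0.
Proof. rewrite (Hk 0 0) by (simpl; lra). simpl. ring. Qed.

Lemma H_INR k : Hf (INR k) = E k.
Proof. rewrite (Hk k (INR k)) by lra. ring. Qed.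

Lemma H_cont x : 0 < x -> continuity_pt Hf x.
Proof.
  intros Hx. unfold continuity_pt, continue_in, limit1_in, limit_in. intros eps Heps.
  set (L := E (S (fl (x + 1)))).
  assert (HL : 1 <= L). { unfold L. pose proof (E_step (fl (x+1))). pose proof (E_nonneg (fl (x+1))). lra. }
  exists (Rmin x (Rmin 1 (eps / L))). split.
  { apply Rmin_pos. lra. apply Rmin_pos. lra. apply Rdiv_lt_0_compat; lra. }
  intros y [_ Hy]. simpl in Hy |- *. unfold Rdist in Hy |- *.
  pose proof (Rmin_l x (Rmin 1 (eps / L))). pose proof (Rmin_r x (Rmin 1 (eps / L))).
  pose proof (Rmin_l 1 (eps / L)). pose proof (Rmin_r 1 (eps / L)).
  assert (HeL : eps / L * L = eps) by (field; lra).
  destruct (Rle_or_lt x y).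
  - rewrite Rabs_pos_eq in Hy by lra.
    pose proof (H_incr x y ltac:(lra) H3).
    assert (E (S (fl y)) <= L) by (unfold L; apply E_mono; apply le_n_S, fl_mono; lra).
    rewrite Rabs_pos_eq by lra. nra.
  - rewrite Rabs_left in Hy by lra.
    pose proof (H_incr y x ltac:(lra) ltac:(lra)).
    assert (E (S (fl x)) <= L) by (unfold L; apply E_mono; apply le_n_S, fl_mono; lra).
    rewrite Rabs_left by lra. nra.
Qed.
End Dom.

Lemma dominate (D : nat -> R) : exists H : R -> R,
  (forall x, 0 < x -> continuity_pt H x) /\
  (forall x y, 0 <= x <= y -> y - x <= H y - H x) /\ H 0 = 0 /\
  (forall k, D (S k) <= H (INR (S k))).
Proof.
  exists (Hf D). split; [|split; [|split]].
  - apply H_cont.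
  - intros x y [A B]. apply H_incr; auto.
  - apply H_0.
  - intro k. rewrite H_INR. apply E_dom.
Qed.

Section NormFacts.
Variable X : NormedSpace.
Implicit Types a b : X.

Lemma ns_scal0 a : ns_scal 0 a = ns_zero.
Proof.
  set (z := ns_scal 0 a).
  assert (h : z = ns_add z z).
  { unfold z. rewrite <- ns_scal_distr_r. rewrite Rplus_0_r. reflexivity. }
  transitivity (ns_add (ns_add z z) (ns_opp z)).
  - rewrite <- ns_add_assoc, ns_add_opp, ns_add_zero. reflexivity.
  - rewrite <- h. apply ns_add_opp.
Qed.

Lemma ns_norm0 : ns_norm (@ns_zero X) = 0.
Proof. rewrite <- (ns_scal0 ns_zero). rewrite ns_norm_scal, Rabs_R0. ring. Qed.

Lemma ns_opp_scal a : ns_opp a = ns_scal (-1) a.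
Proof.
  assert (h : ns_add a (ns_scal (-1) a) = ns_zero).
  { rewrite <- (ns_scal_one X a) at 1. rewrite <- ns_scal_distr_r.
    replace (1 + -1) with 0 by ring. apply ns_scal0. }
  rewrite <- (ns_add_zero X (ns_opp a)). rewrite <- h.
  rewrite ns_add_assoc. rewrite (ns_add_comm X (ns_opp a) a), ns_add_opp.
  rewrite ns_add_comm, ns_add_zero. reflexivity.
Qed.

Lemma ns_norm_opp a : ns_norm (ns_opp a) = ns_norm a.
Proof. rewrite ns_opp_scal, ns_norm_scal. replace (Rabs (-1)) with 1. ring. rewrite Rabs_left by lra. ring. Qed.

Lemma ns_norm_nonneg a : 0 <= ns_norm a.
Proof.
  pose proof (ns_norm_triangle X a (ns_opp a)). rewrite ns_add_opp, ns_norm0, ns_norm_opp in H. lra.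
Qed.

Lemma ns_sub_add a b : ns_add (ns_sub a b) b = a.
Proof.
  unfold ns_sub. rewrite <- ns_add_assoc. rewrite (ns_add_comm X (ns_opp b) b), ns_add_opp, ns_add_zero.
  reflexivity.
Qed.

Lemma ns_sub_swap a b : ns_sub b a = ns_opp (ns_sub a b).
Proof.
  unfold ns_sub. rewrite !ns_opp_scal. rewrite ns_scal_distr_l, ns_scal_assoc.
  replace (-1 * -1) with 1 by ring. rewrite ns_scal_one. apply ns_add_comm.
Qed.

Lemma ns_norm_rev a b : Rabs (ns_norm a - ns_norm b) <= ns_norm (ns_sub a b).
Proof.
  pose proof (ns_norm_triangle X (ns_sub a b) b) as h1. rewrite ns_sub_add in h1.
  pose proof (ns_norm_triangle X (ns_sub b a) a) as h2. rewrite ns_sub_add in h2.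
  rewrite ns_sub_swap, ns_norm_opp in h2.
  unfold Rabs. destruct (Rcase_abs _); lra.
Qed.
End NormFacts.

Lemma cnn_of_cpt f : (forall x, 0 <= x -> continuity_pt (fun y => f (Rmax 0 y)) x) -> cont_on_nonneg f.
Proof.
  intros H x eps Hx Heps. specialize (H x Hx eps Heps).
  destruct H as [alp [Ha H]]. exists alp. split; [lra|]. intros y Hy Hyx.
  destruct (Req_dec y x) as [->|Hne]. { rewrite Rminus_diag, Rabs_R0. lra. }
  assert (h := H y). simpl in h. unfold Rdist in h.
  rewrite (Rmax_right 0 y Hy), (Rmax_right 0 x Hx) in h. apply h. split; auto.
  split; [exact I|auto].
Qed.

Lemma cpt_of_cnn f : cont_on_nonneg f -> forall x, 0 <= x -> continuity_pt (fun y => f (Rmax 0 y)) x.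
Proof.
  intros H x Hx eps Heps. destruct (H x eps Hx Heps) as [d [Hd Hd']].
  exists d. split; [lra|]. intros y [_ Hy]. simpl in Hy |- *. unfold Rdist in Hy |- *.
  rewrite (Rmax_right 0 x Hx). apply Hd'. apply Rmax_l.
  unfold Rmax. destruct (Rle_dec 0 y). auto.
  rewrite Rabs_left in Hy by lra. unfold Rabs; destruct (Rcase_abs _); lra.
Qed.

Lemma cnn_plus f g : cont_on_nonneg f -> cont_on_nonneg g -> cont_on_nonneg (fun y => f y + g y).
Proof.
  intros Hf Hg. apply cnn_of_cpt. intros x Hx.
  apply (continuity_pt_plus (fun y => f (Rmax 0 y)) (fun y => g (Rmax 0 y))); apply cpt_of_cnn; auto.
Qed.

Lemma cnn_mult f g : cont_on_nonneg f -> cont_on_nonneg g -> cont_on_nonneg (fun y => f y * g y).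
Proof.
  intros Hf Hg. apply cnn_of_cpt. intros x Hx.
  apply (continuity_pt_mult (fun y => f (Rmax 0 y)) (fun y => g (Rmax 0 y))); apply cpt_of_cnn; auto.
Qed.

Lemma cnn_const c : cont_on_nonneg (fun _ => c).
Proof. intros x eps _ He. exists 1. split; [lra|]. intros. rewrite Rminus_diag, Rabs_R0. lra. Qed.

Lemma cnn_id : cont_on_nonneg (fun y => y).
Proof. intros x eps _ He. exists eps. split; [lra|]. intros. auto. Qed.

Lemma cnn_comp g f : cont_on_nonneg g -> cont_on_nonneg f -> (forall y, 0 <= y -> 0 <= f y) ->
  cont_on_nonneg (fun y => g (f y)).
Proof.
  intros Hg Hf Hp. apply cnn_of_cpt. intros x Hx.
  apply (continuity_pt_ext (comp (fun z => g (Rmax 0 z)) (fun y => f (Rmax 0 y)))).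
  { intro y. unfold comp. rewrite (Rmax_right 0 (f (Rmax 0 y))). auto. apply Hp, Rmax_l. }
  apply continuity_pt_comp. apply cpt_of_cnn; auto.
  apply cpt_of_cnn; auto. apply Hp, Rmax_l.
Qed.

Lemma cnn_comp2 g f : (forall x, 0 <= x -> continuity_pt g (f x)) -> cont_on_nonneg f ->
  cont_on_nonneg (fun y => g (f y)).
Proof.
  intros Hg Hf. apply cnn_of_cpt. intros x Hx.
  apply (continuity_pt_comp (fun y => f (Rmax 0 y)) g). apply cpt_of_cnn; auto.
  rewrite (Rmax_right 0 x Hx). auto.
Qed.

Fixpoint Tseq (tau : nat -> R) (n : nat) : R :=
  match n with 0 => 0 | S i => Tseq tau i + 1 + tau i end.

Fixpoint Ssum (b : nat -> R) (T : nat -> R) (J : nat) : R :=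
  match J with 0 => 0 | S i => Ssum b T i + b i * (T (S i) - T i) end.

Lemma Tseq_step tau j : 0 <= tau j -> Tseq tau j + 1 <= Tseq tau (S j).
Proof. intros. simpl. lra. Qed.

Lemma Tseq_mono tau : (forall j, 0 <= tau j) -> forall i j, (i <= j)%nat -> Tseq tau i <= Tseq tau j.
Proof. intros Ht i j h. induction h. lra. pose proof (Tseq_step tau m (Ht m)). lra. Qed.

Lemma Tseq_ge tau : (forall j, 0 <= tau j) -> forall j, INR j <= Tseq tau j.
Proof. intros Ht j. induction j. simpl; lra. rewrite S_INR. pose proof (Tseq_step tau j (Ht j)). lra. Qed.

Lemma Tseq_tau tau j : (forall j, 0 <= tau j) -> tau j <= Tseq tau (S j).
Proof. intros Ht. simpl. pose proof (Tseq_ge tau Ht j). pose proof (pos_INR j). lra. Qed.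

Lemma pow2_ge n : INR n + 1 <= 2 ^ n.
Proof. induction n. simpl; lra. rewrite S_INR. simpl. pose proof (pos_INR n). lra. Qed.

Lemma Ssum_bound (b T : nat -> R) A c :
  (forall j, (j < c)%nat -> b j = A) ->
  (forall j, (c <= j)%nat -> b j * (T (S j) - T j) <= / 2 ^ j) ->
  T O = 0 -> (forall i j, (i <= j)%nat -> T i <= T j) -> 0 <= A ->
  forall J, Ssum b T J <= A * T c + 2 / 2 ^ c.
Proof.
  intros Hb1 Hb2 HT0 HTm HA.
  assert (Ha : forall J, (J <= c)%nat -> Ssum b T J = A * T J).
  { induction J; intros h. simpl. rewrite HT0. ring. simpl. rewrite IHJ by lia. rewrite Hb1 by lia. ring. }
  assert (Hp : forall j, 0 < 2 ^ j) by (intro; apply pow_lt; lra).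
  assert (Hb : forall J, (c <= J)%nat -> Ssum b T J <= A * T c + 2 / 2 ^ c - 2 / 2 ^ J).
  { intros J h. induction h. rewrite Ha by lia. lra.
    simpl Ssum. specialize (Hb2 m ltac:(lia)).
    assert (2 / 2 ^ m - 2 / 2 ^ S m = / 2 ^ m). { simpl. field. pose proof (Hp m). lra. }
    lra. }
  intro J. destruct (le_lt_dec J c).
  - rewrite Ha by auto. pose proof (HTm J c l). pose proof (Hp c).
    assert (0 <= 2 / 2 ^ c) by (apply Rlt_le, Rdiv_lt_0_compat; lra). nra.
  - pose proof (Hb J ltac:(lia)). pose proof (Hp J).
    assert (0 <= 2 / 2 ^ J) by (apply Rlt_le, Rdiv_lt_0_compat; lra). lra.
Qed.

Lemma integral_pieces (f : R -> R) (T b : nat -> R) (s0 t : R) :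
  0 <= t -> T O = 0 -> (forall j, T j <= T (S j)) -> (forall j, 0 <= T j) -> (forall j, 0 <= b j) -> 0 <= s0 ->
  (forall a c, 0 <= a -> a <= c -> c <= t -> ex_RInt f a c) ->
  (forall j s, T j <= s <= T (S j) -> 0 <= s <= t -> f s <= b j + s0) ->
  forall J, RInt f 0 (Rmin (T J) t) <= Ssum b T J + s0 * Rmin (T J) t.
Proof.
  intros Ht HT0 HTm HT Hb Hs0 Hex Hf. induction J.
  - simpl. rewrite HT0. rewrite Rmin_left by lra. rewrite RInt_point. simpl. unfold zero; simpl. lra.
  - set (a := Rmin (T J) t) in *. set (c := Rmin (T (S J)) t).
    specialize (HTm J). pose proof (Hb J). pose proof (HT J).
    assert (Ha0 : 0 <= a) by (unfold a, Rmin; destruct (Rle_dec _ _); lra).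
    assert (Hac : a <= c) by (unfold a, c, Rmin; destruct (Rle_dec _ _); destruct (Rle_dec _ _); lra).
    assert (Hct : c <= t) by (unfold c, Rmin; destruct (Rle_dec _ _); lra).
    assert (Hat : a <= t) by lra.
    assert (Hlen : c - a <= T (S J) - T J) by (unfold a, c, Rmin; destruct (Rle_dec _ _); destruct (Rle_dec _ _); lra).
    rewrite <- (RInt_Chasles f 0 a c) by (apply Hex; lra).
    assert (Hpiece : RInt f a c <= RInt (fun _ => b J + s0) a c).
    { apply RInt_le; [lra | apply Hex; lra | apply ex_RInt_const | ].
      intros x [h1 h2]. apply Hf; [|lra]. split.
      - unfold a, Rmin in h1. destruct (Rle_dec _ _); [lra|].
        unfold c, Rmin in h2. destruct (Rle_dec _ _); lra.
      - unfold c, Rmin in h2. destruct (Rle_dec _ _); lra. }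
    rewrite RInt_const in Hpiece. change (scal (c - a) (b J + s0)) with ((c - a) * (b J + s0)) in Hpiece.
    change (plus (RInt f 0 a) (RInt f a c)) with (RInt f 0 a + RInt f a c).
    simpl Ssum. fold c. nra.
Qed.

Lemma K_nonneg g x : class_K g -> 0 <= x -> 0 <= g x.
Proof.
  intros [_ [Hi H0]] Hx. destruct (Req_dec x 0) as [->|]. lra.
  pose proof (Hi 0 x ltac:(lra) ltac:(lra)). lra.
Qed.

Lemma K_mono g x y : class_K g -> 0 <= x -> x <= y -> g x <= g y.
Proof.
  intros [_ [Hi _]] Hx Hxy. destruct (Req_dec x y) as [->|]. lra.
  apply Rlt_le, Hi; lra.
Qed.

Section Alpha.
Variable H : R -> R.
Hypothesis HC : forall x, 0 < x -> continuity_pt H x.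
Hypothesis HI : forall x y, 0 <= x <= y -> y - x <= H y - H x.
Hypothesis H0 : H 0 = 0.

Definition alph v := if Rle_dec v 0 then 0 else / H (/ v).

Lemma H_ge y : 0 <= y -> y <= H y.
Proof. intro. pose proof (HI 0 y ltac:(lra)). lra. Qed.

Lemma H_lt x y : 0 <= x -> x < y -> H x < H y.
Proof. intros. pose proof (HI x y ltac:(lra)). lra. Qed.

Lemma alph_inv y : 0 < y -> alph (/ y) = / H y.
Proof.
  intro. unfold alph. destruct (Rle_dec (/ y) 0).
  - pose proof (Rinv_0_lt_compat y H1). lra.
  - rewrite Rinv_inv. reflexivity.
Qed.

Lemma alph_pos v : 0 < v -> 0 < alph v.
Proof.
  intro. unfold alph. destruct (Rle_dec v 0). lra.
  pose proof (Rinv_0_lt_compat v H1). pose proof (H_ge (/ v) ltac:(lra)).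
  apply Rinv_0_lt_compat. lra.
Qed.

Lemma alph_le v : 0 <= v -> alph v <= v.
Proof.
  intro. unfold alph. destruct (Rle_dec v 0). lra.
  pose proof (Rinv_0_lt_compat v ltac:(lra)). pose proof (H_ge (/ v) ltac:(lra)).
  rewrite <- (Rinv_inv v) at 2. apply Rinv_le_contravar; lra.
Qed.

Lemma alph_K : class_K alph.
Proof.
  split; [|split].
  - apply cnn_of_cpt. intros x Hx. destruct (Req_dec x 0) as [->|Hx0].
    + intros eps Heps. exists eps. split; [lra|]. intros y [_ Hy]. simpl in Hy |- *. unfold Rdist in Hy |- *.
      rewrite (Rmax_left 0 0) by lra. unfold alph at 2. destruct (Rle_dec 0 0); [|lra].
      pose proof (Rmax_l 0 y). pose proof (alph_le (Rmax 0 y) H1).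
      destruct (Req_dec (Rmax 0 y) 0) as [E|E].
      * rewrite E. unfold alph; destruct (Rle_dec 0 0); [|lra]. rewrite Rminus_0_r, Rabs_R0; lra.
      * pose proof (alph_pos (Rmax 0 y) ltac:(lra)). rewrite Rminus_0_r, Rabs_pos_eq by lra.
        unfold Rmax in *. destruct (Rle_dec 0 y). rewrite Rminus_0_r in Hy.
        pose proof (Rle_abs y). lra. lra.
    + assert (Hx' : 0 < x) by lra.
      apply (continuity_pt_locally_ext (fun y => / H (/ y)) _ x x Hx').
      { intros y Hy. unfold Rdist in Hy. assert (0 < y).
        { pose proof (Rle_abs (x - y)). rewrite <- Rabs_Ropp in Hy. replace (- (y - x)) with (x - y) in Hy by ring. lra. }
        rewrite Rmax_right by lra. unfold alph. destruct (Rle_dec y 0); [lra|reflexivity]. }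
      assert (c1 : continuity_pt (fun y => H (/ y)) x).
      { apply (continuity_pt_comp (fun y => / y) H).
        apply (continuity_pt_inv (fun y => y)). apply continuity_pt_id. lra.
        apply HC. apply Rinv_0_lt_compat; lra. }
      apply (continuity_pt_inv (fun y => H (/ y))). exact c1.
      pose proof (H_ge (/ x) (Rlt_le _ _ (Rinv_0_lt_compat x Hx'))). pose proof (Rinv_0_lt_compat x Hx'). lra.
  - intros x y Hx Hxy. destruct (Req_dec x 0) as [->|].
    + unfold alph at 1. destruct (Rle_dec 0 0); [|lra]. apply alph_pos; lra.
    + unfold alph. destruct (Rle_dec x 0); [lra|]. destruct (Rle_dec y 0); [lra|].
      assert (/ y < / x) by (apply Rinv_lt_contravar; nra).
      pose proof (Rinv_0_lt_compat y ltac:(lra)).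
      pose proof (H_lt (/ y) (/ x) ltac:(lra) H2).
      pose proof (H_ge (/ y) ltac:(lra)).
      apply Rinv_lt_contravar; nra.
  - unfold alph. destruct (Rle_dec 0 0); lra.
Qed.
End Alpha.

Lemma frac_le a A B : 0 < a -> B <= A + 1 -> 0 <= A -> / (a * (A + 1)) * B <= / a.
Proof.
  intros Ha HB HA. rewrite Rinv_mult, Rmult_assoc. rewrite <- (Rmult_1_r (/ a)) at 2.
  apply Rmult_le_compat_l. apply Rlt_le, Rinv_0_lt_compat; lra.
  apply (Rmult_le_reg_l (A + 1)). lra. rewrite <- Rmult_assoc, Rinv_r by lra. lra.
Qed.

Lemma Ssum_zero T J : Ssum (fun _ => 0) T J = 0.
Proof. induction J; simpl; [|rewrite IHJ]; ring. Qed.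

Theorem mainTheorem1 (X U UU : NormedSpace) (ev : UU -> R -> U)
    (phi : R -> X -> UU -> X) :
  Banach X -> Banach U ->
  input_function_space U UU ev ->
  forward_complete_control_system X U UU ev phi ->
  ISS X U UU ev phi ->
  norm_to_integral_ISS X U UU ev phi.
Proof.
  intros _ _ _ [_ [_ [Hcont _]]] [beta [gamma [[HKb HLb] [HKg Hiss]]]].
  assert (b_nonneg : forall r s, 0 <= r -> 0 <= s -> 0 <= beta r s)
    by (intros; apply (K_nonneg (fun r => beta r s)); auto).
  assert (b_mono_r : forall r r' s, 0 <= r -> r <= r' -> 0 <= s -> beta r s <= beta r' s)
    by (intros; apply (K_mono (fun r => beta r s)); auto).
  assert (b_zero : forall s, 0 <= s -> beta 0 s = 0)
    by (intros s Hs; destruct (HKb s Hs) as [_ [_ h]]; exact h).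
  assert (b_mono_s : forall r s s', 0 <= r -> 0 <= s -> s <= s' -> beta r s' <= beta r s).
  { intros r s s' Hr Hs Hss. destruct (Req_dec r 0) as [->|Hr0]. rewrite !b_zero by lra; lra.
    destruct (Req_dec s s') as [->|]. lra. destruct (HLb r ltac:(lra)) as [_ [_ [Hd _]]]. apply Rlt_le, Hd; lra. }
  assert (b_pos : forall r, 0 < r -> 0 < beta r 0).
  { intros r Hr. destruct (HKb 0 (Rle_refl 0)) as [_ [Hi H0]]. rewrite <- H0 at 1. apply Hi; lra. }
  assert (Htau : forall j : nat, exists tau, 0 <= tau /\ forall s, tau <= s -> 2 * beta (INR (S j)) s <= / INR (S j)).
  { intro j. assert (Hj : 0 < INR (S j)) by (apply lt_0_INR; lia).
    destruct (HLb _ Hj) as [_ [_ [_ Hlim]]].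
    destruct (Hlim (/ (2 * INR (S j)))) as [T0 HT0]. { apply Rinv_0_lt_compat; lra. }
    exists (Rmax 0 T0). split. apply Rmax_l. intros s Hs.
    assert (h := HT0 s ltac:(pose proof (Rmax_r 0 T0); lra)).
    pose proof (Rle_abs (beta (INR (S j)) s)).
    assert (/ (2 * INR (S j)) * 2 = / INR (S j)) by (field; lra). lra. }
  pose (tau := fun j => proj1_sig (constructive_indefinite_description _ (Htau j))).
  assert (Htau1 : forall j, 0 <= tau j)
    by (intro j; exact (proj1 (proj2_sig (constructive_indefinite_description _ (Htau j))))).
  assert (Htau2 : forall j s, tau j <= s -> 2 * beta (INR (S j)) s <= / INR (S j))
    by (intro j; exact (proj2 (proj2_sig (constructive_indefinite_description _ (Htau j))))).
  pose (T := Tseq tau).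
  assert (T0 : T O = 0) by reflexivity.
  assert (Tm : forall i j, (i <= j)%nat -> T i <= T j) by (apply Tseq_mono; auto).
  assert (Tnn : forall j, 0 <= T j) by (intro j; rewrite <- T0; apply Tm; lia).
  assert (Tge : forall j, INR j <= T j) by (apply Tseq_ge; auto).
  assert (Ttau : forall j, tau j <= T (S j)) by (intro; apply Tseq_tau; auto).
  destruct (dominate (fun j => 2 ^ j * (T (S j) + 1))) as [Ha [HaC [HaI [Ha0 HaD]]]].
  pose (al := alph Ha).
  assert (alK : class_K al) by (apply alph_K; auto).
  assert (al0 : al 0 = 0) by (destruct alK as [_ [_ h]]; exact h).
  assert (al_nn : forall v, 0 <= v -> 0 <= al v) by (intros; apply K_nonneg; auto).
  assert (al_mono : forall v v', 0 <= v -> v <= v' -> al v <= al v') by (intros; apply K_mono; auto).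
  destruct (dominate (fun n => INR n * (al (2 * beta (INR n) 0) * T n + 1))) as [Hp [HpC [HpI [Hp0 HpD]]]].
  assert (Hp_ge : forall y, 0 <= y -> y <= Hp y) by (intros; apply H_ge; auto).
  assert (Hp_mono : forall y y', 0 <= y -> y <= y' -> Hp y <= Hp y')
    by (intros y y' h1 h2; pose proof (HpI y y' ltac:(lra)); lra).
  pose (psi := fun r => r + 3 * (2 * beta r 0) + (2 * beta r 0) * Hp (r + 1)).
  pose (sigma := fun w => w + al (2 * gamma w)).
  assert (psi_nn : forall r, 0 <= r -> 0 <= 3 * (2 * beta r 0) + (2 * beta r 0) * Hp (r + 1)).
  { intros r Hr. pose proof (b_nonneg r 0 Hr (Rle_refl 0)). pose proof (Hp_ge (r+1) ltac:(lra)). nra. }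
  exists al, psi, sigma. split; [exact alK|split; [|split]].
  -
    assert (bK0 : class_K (fun r => beta r 0)) by (apply HKb; lra).
    split; [split; [|split]|].
    + unfold psi. apply cnn_plus. apply cnn_plus. apply cnn_id.
      apply cnn_mult. apply cnn_const. apply cnn_mult. apply cnn_const. apply bK0.
      apply cnn_mult. apply cnn_mult. apply cnn_const. apply bK0.
      apply (cnn_comp2 Hp (fun r => r + 1)). intros; apply HpC; lra.
      apply cnn_plus. apply cnn_id. apply cnn_const.
    + intros x y Hx Hxy. unfold psi.
      destruct bK0 as [_ [Hi _]]. pose proof (Hi x y Hx Hxy).
      pose proof (b_nonneg x 0 Hx (Rle_refl 0)).
      pose proof (Hp_mono (x+1) (y+1) ltac:(lra) ltac:(lra)). pose proof (Hp_ge (x+1) ltac:(lra)).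
      assert (2 * beta x 0 * Hp (x + 1) <= 2 * beta y 0 * Hp (y + 1)).
      { apply Rmult_le_compat; lra. }
      lra.
    + unfold psi. rewrite b_zero by lra. ring.
    + intro M. exists (Rmax 0 M + 1). split. pose proof (Rmax_l 0 M); lra.
      unfold psi. pose proof (psi_nn (Rmax 0 M + 1) ltac:(pose proof (Rmax_l 0 M); lra)).
      pose proof (Rmax_r 0 M). lra.
  -
    split; [split; [|split]|].
    + unfold sigma. apply cnn_plus. apply cnn_id. apply cnn_comp. apply alK.
      apply cnn_mult. apply cnn_const. apply HKg. intros; pose proof (K_nonneg gamma y HKg H); lra.
    + intros x y Hx Hxy. unfold sigma. pose proof (K_nonneg gamma x HKg Hx).
      pose proof (K_mono gamma x y HKg Hx ltac:(lra)).
      pose proof (al_mono (2 * gamma x) (2 * gamma y) ltac:(lra) ltac:(lra)). lra.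
    + unfold sigma. destruct HKg as [_ [_ ->]]. rewrite Rmult_0_r, al0. ring.
    + intro M. exists (Rmax 0 M + 1). split. pose proof (Rmax_l 0 M); lra.
      unfold sigma. pose proof (Rmax_l 0 M). pose proof (Rmax_r 0 M).
      pose proof (K_nonneg gamma (Rmax 0 M + 1) HKg ltac:(lra)).
      pose proof (al_nn (2 * gamma (Rmax 0 M + 1)) ltac:(lra)). lra.
  - intros x u t Ht.
    pose (r := ns_norm x). pose (w := ns_norm u).
    assert (Hr : 0 <= r) by apply ns_norm_nonneg.
    assert (Hw : 0 <= w) by apply ns_norm_nonneg.
    pose (f := fun s => al (ns_norm (phi s x u))).
    assert (ncnn : cont_on_nonneg (fun s => ns_norm (phi s x u))).
    { intros s0 eps Hs0 He. destruct (Hcont x u s0 eps Hs0 He) as [d [Hd Hd']].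
      exists d; split; auto. intros y Hy Hyd. eapply Rle_lt_trans; [apply ns_norm_rev|apply Hd'; auto]. }
    assert (fcnn : cont_on_nonneg f).
    { apply (cnn_comp al (fun s => ns_norm (phi s x u))). apply alK. exact ncnn.
      intros; apply ns_norm_nonneg. }
    assert (Hex : forall a c, 0 <= a -> a <= c -> ex_RInt f a c).
    { intros a c Ha1 Hac. apply (ex_RInt_ext (fun s => f (Rmax 0 s))).
      { intros z [h1 h2]. rewrite Rmin_left in h1 by lra. rewrite Rmax_right by lra. reflexivity. }
      apply (@ex_RInt_continuous R_CompleteNormedModule). intros z [h1 h2]. rewrite Rmin_left in h1 by lra.
      apply continuity_pt_filterlim. apply cpt_of_cnn; auto; lra. }
    pose (s0 := al (2 * gamma w)).
    assert (Hs0 : 0 <= s0) by (apply al_nn; pose proof (K_nonneg gamma w HKg Hw); lra).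
    assert (Hpt : forall s, 0 <= s -> f s <= al (2 * beta r s) + s0).
    { intros s Hs. unfold f, s0. pose proof (Hiss x u s Hs) as h. fold r w in h.
      pose proof (b_nonneg r s Hr Hs). pose proof (K_nonneg gamma w HKg Hw).
      pose proof (al_nn (2 * beta r s) ltac:(lra)). pose proof (al_nn (2 * gamma w) ltac:(lra)).
      apply (Rle_trans _ (al (beta r s + gamma w))). apply al_mono; auto. apply ns_norm_nonneg.
      destruct (Rle_dec (beta r s) (gamma w)).
      - pose proof (al_mono (beta r s + gamma w) (2 * gamma w) ltac:(lra) ltac:(lra)). lra.
      - pose proof (al_mono (beta r s + gamma w) (2 * beta r s) ltac:(lra) ltac:(lra)). lra. }
    assert (Key : exists b : nat -> R, (forall j, 0 <= b j) /\
       (forall j s, T j <= s <= T (S j) -> 0 <= s -> al (2 * beta r s) <= b j) /\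
       forall J, Ssum b T J <= psi r).
    { destruct (Req_dec r 0) as [Hr0|Hr0].
      - exists (fun _ => 0). split; [intros; lra|split].
        + intros j s _ Hs. rewrite Hr0, b_zero by auto. rewrite Rmult_0_r, al0. lra.
        + intro J. rewrite Ssum_zero. pose proof (psi_nn r Hr). unfold psi. lra.
      - assert (Hrp : 0 < r) by lra.
        pose (rho := 2 * beta r 0).
        assert (Hrho : 0 < rho) by (unfold rho; pose proof (b_pos r Hrp); lra).
        pose (bc := fun c j => if (j <? c)%nat then al rho else / (2 ^ j * (T (S j) + 1))).
        assert (Dpos : forall j, 0 < 2 ^ j * (T (S j) + 1)) by (intro j; pose proof (Tnn (S j)); pose proof (pow_lt 2 j ltac:(lra)); nra).
        assert (bc_nn : forall c j, 0 <= bc c j).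
        { intros c j. unfold bc. destruct (j <? c)%nat. apply al_nn; lra. apply Rlt_le, Rinv_0_lt_compat, Dpos. }
        assert (bc_valid : forall c, (1 <= c)%nat -> r <= INR c -> forall j s, T j <= s <= T (S j) -> 0 <= s -> al (2 * beta r s) <= bc c j).
        { intros c Hc Hrc j s Hjs Hs. unfold bc. destruct (Nat.ltb_spec j c) as [Hjc|Hjc].
          - apply al_mono. pose proof (b_nonneg r s Hr Hs); lra. pose proof (b_mono_s r 0 s Hr (Rle_refl 0) Hs). unfold rho; lra.
          - destruct j as [|k]. lia.
            assert (h1 := Htau2 k s ltac:(pose proof (Ttau k); lra)).
            assert (Hk : 0 < INR (S k)) by (apply lt_0_INR; lia).
            assert (h2 : beta r s <= beta (INR (S k)) s) by (apply b_mono_r; auto; apply (Rle_trans _ (INR c)); auto; apply le_INR; lia).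
            apply (Rle_trans _ (al (/ INR (S k)))).
            { apply al_mono. pose proof (b_nonneg r s Hr Hs); lra. lra. }
            unfold al. rewrite alph_inv by auto. apply Rinv_le_contravar. apply Dpos. apply HaD. }
        assert (bc_sum : forall c J, Ssum (bc c) T J <= al rho * T c + 2 / 2 ^ c).
        { intro c. apply Ssum_bound.
          - intros j Hj. unfold bc. rewrite (proj2 (Nat.ltb_lt j c) Hj). reflexivity.
          - intros j Hj. unfold bc. rewrite (proj2 (Nat.ltb_ge j c) Hj).
            pose proof (Tnn j). pose proof (Tm j (S j) ltac:(lia)).
            apply frac_le. apply pow_lt; lra. lra. apply Tnn.
          - exact T0.
          - exact Tm.
          - apply al_nn; lra. }
        pose (n := S (fl r)).
        assert (Hrn : r < INR n) by (unfold n; rewrite S_INR; pose proof (fl_spec r Hr); lra).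
        assert (Hn1 : (1 <= n)%nat) by (unfold n; lia).
        assert (Hn0 : 0 < INR n) by lra.
        pose proof (Hp_ge (r+1) ltac:(lra)). pose proof (b_nonneg r 0 Hr (Rle_refl 0)).
        destruct (Rle_or_lt rho (/ INR n)) as [Hsm|Hbig].
        + pose (m := fl (/ rho)).
          assert (Hinvrho : 0 < / rho) by (apply Rinv_0_lt_compat; auto).
          assert (Hnr : INR n <= / rho).
          { rewrite <- (Rinv_inv (INR n)). apply Rinv_le_contravar; auto. }
          assert (Hmn : (n <= m)%nat).
          { unfold m. rewrite <- (fl_eq n (INR n)) at 1 by lra. apply fl_mono; lra. }
          pose proof (fl_spec (/ rho) ltac:(lra)) as Fm. fold m in Fm.
          assert (Hm0 : 0 < INR m) by (apply lt_0_INR; lia).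
          exists (bc m). split; [apply bc_nn|split].
          * apply bc_valid. lia. apply (Rle_trans _ (INR n)). lra. apply le_INR; auto.
          * intro J. eapply Rle_trans; [apply bc_sum|].
            assert (Hal : al rho <= / (2 ^ m * (T (S m) + 1))).
            { clear bc_sum. destruct m as [|k]. lia.
              apply (Rle_trans _ (al (/ INR (S k)))).
              apply al_mono. lra. rewrite <- (Rinv_inv rho). apply Rinv_le_contravar; lra.
              unfold al. rewrite alph_inv by auto. apply Rinv_le_contravar. apply Dpos. apply HaD. }
            pose proof (pow_lt 2 m ltac:(lra)). pose proof (Tnn m). pose proof (Tm m (S m) ltac:(lia)).
            assert (HalT : al rho * T m <= / 2 ^ m).
            { apply (Rle_trans _ (/ (2 ^ m * (T (S m) + 1)) * T m)).
              apply Rmult_le_compat_r; auto. apply frac_le; auto. lra. }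
            assert (Hp2 : / 2 ^ m <= / (INR m + 1)) by (apply Rinv_le_contravar; [lra| apply pow2_ge]).
            assert (Hrho2 : / (INR m + 1) < rho).
            { rewrite <- (Rinv_inv rho). apply Rinv_lt_contravar. nra. lra. }
            assert (2 / 2 ^ m = 2 * / 2 ^ m) by (unfold Rdiv; ring).
            unfold psi. fold rho. nra.
        + exists (bc n). split; [apply bc_nn|split].
          * apply bc_valid; auto. lra.
          * intro J. eapply Rle_trans; [apply bc_sum|].
            assert (Ha1 : al rho <= al (2 * beta (INR n) 0)).
            { apply al_mono. lra. unfold rho. pose proof (b_mono_r r (INR n) 0 Hr ltac:(lra) (Rle_refl 0)). lra. }
            assert (H2n : 2 / 2 ^ n <= 1).
            { pose proof (pow2_ge n) as P2n. pose proof (le_INR 1 n Hn1) as L1n. change (INR 1) with 1 in L1n.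
              assert (0 < 2 ^ n) by (apply pow_lt; lra). unfold Rdiv. rewrite <- (Rinv_r (2 ^ n)) by lra. apply Rmult_le_compat_r. apply Rlt_le, Rinv_0_lt_compat; lra. lra. }
            pose (G := al (2 * beta (INR n) 0) * T n + 1).
            assert (HG : 0 <= G) by (unfold G; pose proof (Tnn n); pose proof (al_nn (2 * beta (INR n) 0) ltac:(pose proof (b_nonneg (INR n) 0 ltac:(lra) (Rle_refl 0)); lra)); nra).
            assert (HD : INR n * G <= Hp (INR n)) by (apply (HpD (fl r))).
            assert (HHp : Hp (INR n) <= Hp (r + 1)) by (apply Hp_mono; [lra|unfold n; rewrite S_INR; pose proof (fl_spec r Hr); lra]).
            assert (Hnr : 1 < INR n * rho).
            { apply (Rmult_lt_compat_l (INR n)) in Hbig; auto. rewrite Rinv_r in Hbig by lra. lra. }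
            assert (Hsum : al rho * T n + 2 / 2 ^ n <= G) by (unfold G; pose proof (Tnn n); nra).
            assert (G <= rho * Hp (r + 1)) by nra.
            unfold psi. fold rho. nra. }
    destruct Key as [b [Hb1 [Hb2 Hb3]]].
    pose (J := S (fl t)).
    assert (HJ : Rmin (T J) t = t).
    { apply Rmin_right. pose proof (Tge J). unfold J in *. rewrite S_INR in *.
      pose proof (fl_spec t Ht). lra. }
    assert (Hint : RInt f 0 t <= Ssum b T J + s0 * t).
    { rewrite <- HJ. apply integral_pieces; [lra|exact T0|intro j; apply Tm; lia|exact Tnn|exact Hb1|exact Hs0| |].
      intros a c Ha1 Hac _. apply Hex; auto.
      intros j s Hjs [Hs Hst]. pose proof (Hpt s Hs). pose proof (Hb2 j s Hjs Hs). lra. }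
    assert (pr : Riemann_integrable f 0 t) by (apply ex_RInt_Reals_0; apply Hex; lra).
    exists pr. rewrite <- RInt_Reals. pose proof (Hb3 J).
    unfold sigma. fold w. fold s0. fold r. change (RInt f 0 t <= psi r + t * (w + s0)). pose proof (Rmult_le_pos t w Ht Hw). nra.
Qed.
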